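(* Let $N\ge 2$, $n\ge1$. Let $\{\mathcal{G}_k : k\in\mathcal{P}\}$, $\mathcal{P}=\{1,\ldots,Q\}$, be a finite family of weighted digraphs on the node set $\{1,\ldots,N\}$ with weights $a^k_{ij}\ge0$, $a^k_{ii}=0$, and let $\sigma:[0,\infty)\to\mathcal{P}$ be a right-continuous, piecewise constant switching signal whose consecutive switching instants are separated by at least a dwell time $T_{\min}>0$. Assume there exists $T>0$ such that for every $t_0\ge0$ the union graph $\bigcup_{t\in[t_0,t_0+T)}\mathcal{G}_{\sigma(t)}$ contains a directed spanning tree. Let $f:\mathbb{R}^n\to\mathbb{R}^n$ be continuous, $\Gamma$ a positive definite diagonal $n\times n$ matrix, and suppose there exist positive definite diagonal matrices $Q=\mathrm{diag}\{q^1,\ldots,q^n\}$ and $\Sigma=\mathrm{diag}\{\delta^1,\ldots,\delta^n\}$ such that for all $x,y\in\mathbb{R}^n$, $$(x-y)^{\mathrm{T}}Q\big(f(x)-f(y)-\Sigma x+\Sigma y\big)\ge 0.$$ Consider, for a coupling strength $\phi>0$, $$\dot{x}_i=f(x_i)+\phi\sum_{j=1}^N a_{ij}^{\sigma(t)}\Gamma(x_j-x_i),\qquad i=1,\ldots,N.$$ Then synchronization cannot be reached if $\phi$ is sufficiently small: there exists $\phi_*>0$ such that for every $\phi\in(0,\phi_* )$ the system does not achieve synchronization (i.e., it is not true that $\lim_{t\to\infty}\|x_i(t)-x_j(t)\|=0$ for all $i,j$ and all initial conditions).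
   Context: For a weighted digraph with weights $a_{ij}\ge0$, $a_{ij}>0$ means that $(j,i)$ is an edge (information flows from $j$ to $i$). A directed path is a sequence of edges $(i_1,i_2),(i_2,i_3),\ldots,(i_{q-1},i_q)$. A digraph contains a directed spanning tree if some node has a directed path to every other node. The union of a family of graphs on the same node set has as edge set the union of their edge sets. *)

(* Defs.v *)
From HB Require Import structures.
From mathcomp Require Import all_boot all_order all_algebra.
From mathcomp Require Import all_classical all_reals all_analysis.
Set Implicit Arguments. Unset Strict Implicit. Unset Printing Implicit Defensive.
Import Order.TTheory GRing.Theory Num.Theory.
Import numFieldNormedType.Exports.
Local Open Scope classical_set_scope.
Local Open Scope ring_scope.

Section Defs.
Variable R : realType.

Definition posdef n (M : 'M[R]_n) : Prop :=
  forall v : 'cV[R]_n, v != 0 -> 0 < (v^T *m M *m v) ord0 ord0.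

Definition enorm n (v : 'cV[R]_n) : R := Num.sqrt (\sum_(l < n) v l ord0 ^+ 2).

(* Weighted digraph family: a k i j >= 0 is the weight of edge (j,i) in G_k. *)
Definition switching_instant Qn (sigma : R -> 'I_Qn) (t : R) : Prop :=
  0 < t /\ forall e, 0 < e -> exists r, t - e < r /\ r < t /\ sigma r <> sigma t.

Definition dwell_signal Qn (sigma : R -> 'I_Qn) (Tmin : R) : Prop :=
  [/\ 0 < Tmin,
      (forall t, 0 <= t -> exists2 e, 0 < e &
          forall r, t <= r -> r < t + e -> sigma r = sigma t),
      (forall t, 0 < t -> exists2 e, 0 < e &
          forall r r', t - e < r -> r < t -> t - e < r' -> r' < t -> sigma r = sigma r')
    & (forall s1 s2, switching_instant sigma s1 -> switching_instant sigma s2 ->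
          s1 < s2 -> Tmin <= s2 - s1)].

Definition union_edge N Qn (a : 'I_Qn -> 'I_N -> 'I_N -> R) (sigma : R -> 'I_Qn)
  (t0 T : R) : rel 'I_N :=
  fun j i => `[< exists t, [/\ t0 <= t, t < t0 + T & 0 < a (sigma t) i j] >].

Definition has_spanning_tree N (e : rel 'I_N) : Prop :=
  exists r : 'I_N, forall i : 'I_N, i != r ->
    exists p : seq 'I_N, path e r p /\ last r p = i.

Definition rhs N n Qn (f : 'cV[R]_n -> 'cV[R]_n) (Gamma : 'M[R]_n)
  (a : 'I_Qn -> 'I_N -> 'I_N -> R) (sigma : R -> 'I_Qn) (phi : R)
  (x : 'I_N -> 'cV[R]_n) (t : R) (i : 'I_N) : 'cV[R]_n :=
  f (x i) + phi *: \sum_(j < N) a (sigma t) i j *: (Gamma *m (x j - x i)).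

(* a (Caratheodory) solution on [0, +oo): continuous on [0,+oo) and satisfying
   the ODE at every t > 0 that is not a switching instant *)
Definition is_solution N n Qn f Gamma a sigma phi (x : R -> 'I_N -> 'cV[R]_n) : Prop :=
  (forall i, {within [set t : R | 0 <= t], continuous (fun t => x t i)}) /\
  (forall t, 0 < t -> ~ switching_instant sigma t -> forall i,
      is_derive t 1 (fun s => x s i) (@rhs N n Qn f Gamma a sigma phi (x t) t i)).

Definition synchronizes N n Qn f Gamma a sigma phi : Prop :=
  (forall x0 : 'I_N -> 'cV[R]_n, exists x : R -> 'I_N -> 'cV[R]_n,
      @is_solution N n Qn f Gamma a sigma phi x /\ x 0 = x0) /\
  (forall x : R -> 'I_N -> 'cV[R]_n, @is_solution N n Qn f Gamma a sigma phi x ->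
      forall i j, (fun t => enorm (x t i - x t j)) @ +oo --> (0 : R)).

End Defs.

(* Main.v *)
Require Import Defs.
From HB Require Import structures.
From mathcomp Require Import all_boot all_order all_algebra.
From mathcomp Require Import all_classical all_reals all_analysis.
From mathcomp Require Import ring lra.
Import Order.TTheory GRing.Theory Num.Theory.
Import numFieldNormedType.Exports.
Local Open Scope classical_set_scope.
Local Open Scope ring_scope.
Section H.
Variable R : realType.

Lemma diag_mulE n (D : 'M[R]_n) (v : 'cV[R]_n) (l : 'I_n) :
  is_diag_mx D -> (D *m v) l ord0 = D l l * v l ord0.
Proof.
move/is_diag_mxP => hD; rewrite mxE (bigD1 l) //= big1 ?addr0 // => k kl.
by rewrite hD ?mul0r // eq_sym.
Qed.

Lemma diag_quadE n (u w : 'cV[R]_n) (D : 'M[R]_n) :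
  is_diag_mx D -> (u^T *m D *m w) ord0 ord0 = \sum_l u l ord0 * (D l l * w l ord0).
Proof.
move=> hD; rewrite -mulmxA mxE; apply: eq_bigr => l _.
by rewrite diag_mulE // mxE.
Qed.

Lemma diag_pos n (D : 'M[R]_n) (l : 'I_n) : is_diag_mx D -> posdef D -> 0 < D l l.
Proof.
move=> hD hP; have := hP (delta_mx l ord0).
rewrite diag_quadE // (bigD1 l) //= big1 ?addr0; last first.
  by move=> k kl; rewrite !mxE (negbTE kl) mul0r.
rewrite !mxE !eqxx mul1r mulr1; apply.
apply/eqP => /matrixP /(_ l ord0); rewrite !mxE !eqxx /=.
by move/eqP; rewrite oner_eq0.
Qed.

Lemma prod_bound (q c M d e V : R) : 0 <= q -> 0 <= c -> c <= M ->
  q * d ^+ 2 <= V -> q * e ^+ 2 <= V -> -(M * V) <= q * d * (c * e) <= M * V.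
Proof.
move=> q0 c0 cM hd he.
have V0 : 0 <= V by apply: le_trans hd; apply: mulr_ge0 => //; exact: sqr_ge0.
have h1 : 0 <= q * (d + e) ^+ 2 by apply: mulr_ge0 => //; exact: sqr_ge0.
have h2 : 0 <= q * (d - e) ^+ 2 by apply: mulr_ge0 => //; exact: sqr_ge0.
have h3 : - V <= q * d * e <= V.
  apply/andP; split; nra.
case/andP: h3 => h3 h4.
apply/andP; split; nra.
Qed.


Lemma rhs_comp N n (f : 'cV[R]_n -> 'cV[R]_n) (Gamma : 'M[R]_n) (aa : 'I_N -> 'I_N -> R)
  (phi : R) (y : 'I_N -> 'cV[R]_n) i l : is_diag_mx Gamma ->
  (f (y i) + phi *: \sum_(k < N) aa i k *: (Gamma *m (y k - y i))) l ord0 =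
  f (y i) l ord0 + phi * \sum_(k < N) aa i k * (Gamma l l * (y k l ord0 - y i l ord0)).
Proof.
move=> hG; rewrite !mxE summxE; congr (_ + _ * _); apply: eq_bigr => k _.
by rewrite mxE diag_mulE // !mxE.
Qed.

Lemma le_term3 N N2 n (G : 'I_N -> 'I_N2 -> 'I_n -> R) i j l :
  (forall i j l, 0 <= G i j l) ->
  G i j l <= \sum_(i < N) \sum_(j < N2) \sum_(l < n) G i j l.
Proof.
move=> h0.
rewrite (bigD1 i) //= (bigD1 j) //= (bigD1 l) //= -!addrA lerDl.
apply: addr_ge0; first by apply: sumr_ge0 => *; exact: h0.
apply: addr_ge0; first by apply: sumr_ge0 => *; apply: sumr_ge0 => *; exact: h0.
by apply: sumr_ge0 => *; apply: sumr_ge0 => *; apply: sumr_ge0 => *; exact: h0.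
Qed.


Lemma key_ineq N n (f : 'cV[R]_n -> 'cV[R]_n) (Qm Sg Gamma : 'M[R]_n)
  (aa : 'I_N -> 'I_N -> R) (phi m M : R) (y : 'I_N -> 'cV[R]_n) :
  is_diag_mx Qm -> is_diag_mx Sg -> is_diag_mx Gamma ->
  (forall x z : 'cV[R]_n,
      0 <= ((x - z)^T *m Qm *m (f x - f z - Sg *m x + Sg *m z)) ord0 ord0) ->
  (forall l, 0 <= Qm l l) -> (forall l, m <= Sg l l) ->
  (forall i k l, 0 <= aa i k * Gamma l l <= M) -> 0 <= phi ->
  phi * (2 * N%:R * M * (n%:R * N%:R * N%:R)) <= m ->
  0 <= \sum_(i < N) \sum_(j < N) \sum_(l < n) Qm l l *
     (2 * (y i l ord0 - y j l ord0) *
      ((f (y i) + phi *: \sum_(k < N) aa i k *: (Gamma *m (y k - y i))) l ord0 -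
       (f (y j) + phi *: \sum_(k < N) aa j k *: (Gamma *m (y k - y j))) l ord0)).
Proof.
move=> hQd hSd hGd hQ hq hm haM hphi hK.
set V := \sum_(i < N) \sum_(j < N) \sum_(l < n) Qm l l * (y i l ord0 - y j l ord0) ^+ 2.
have hV i j l : Qm l l * (y i l ord0 - y j l ord0) ^+ 2 <= V.
  apply: (@le_term3 N N n (fun i j l => Qm l l * (y i l ord0 - y j l ord0) ^+ 2)).
  by move=> *; apply: mulr_ge0 => //; exact: sqr_ge0.
have V0 : 0 <= V.
  apply: sumr_ge0 => *; apply: sumr_ge0 => *; apply: sumr_ge0 => *.
  by apply: mulr_ge0 => //; exact: sqr_ge0.
set c := 2 * N%:R * M * V.
have hC i j l : - c <= Qm l l * (y i l ord0 - y j l ord0) *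
    (\sum_(k < N) aa i k * (Gamma l l * (y k l ord0 - y i l ord0)) -
     \sum_(k < N) aa j k * (Gamma l l * (y k l ord0 - y j l ord0))).
  rewrite mulrBr !mulr_sumr.
  have h1 : \sum_(k < N) (- (M * V)) <= \sum_(k < N) Qm l l * (y i l ord0 - y j l ord0) *
      (aa i k * (Gamma l l * (y k l ord0 - y i l ord0))).
    apply: ler_sum => k _.
    have [hk1 hk2] := andP (haM i k l).
    have := prod_bound (Qm l l) (aa i k * Gamma l l) M (y j l ord0 - y i l ord0) (y k l ord0 - y i l ord0) V
       (hq l) hk1 hk2 (hV j i l) (hV k i l).
    case/andP => _ hb.
    lra.
  have h2 : \sum_(k < N) Qm l l * (y i l ord0 - y j l ord0) *
      (aa j k * (Gamma l l * (y k l ord0 - y j l ord0))) <= \sum_(k < N) (M * V).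
    apply: ler_sum => k _.
    have [hk1 hk2] := andP (haM j k l).
    have := prod_bound (Qm l l) (aa j k * Gamma l l) M (y i l ord0 - y j l ord0) (y k l ord0 - y j l ord0) V
       (hq l) hk1 hk2 (hV i j l) (hV k j l).
    case/andP => _ hb.
    lra.
  move: h1 h2; rewrite !sumr_const card_ord /c => h1 h2.
  rewrite -mulr_natr in h1; rewrite -mulr_natr in h2.
  rewrite -mulr_natr in h1 h2. lra.
have hP i j : m * \sum_(l < n) Qm l l * (y i l ord0 - y j l ord0) ^+ 2 <=
    \sum_(l < n) Qm l l * (y i l ord0 - y j l ord0) * (f (y i) l ord0 - f (y j) l ord0).
  have := hQ (y i) (y j); rewrite diag_quadE // => hq2.
  rewrite -subr_ge0 mulr_sumr -sumrB.
  apply: le_trans hq2 _; apply: ler_sum => l _.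
  have E (v : 'cV[R]_n) : \sum_j0 Sg l j0 * v j0 ord0 = Sg l l * v l ord0.
    by rewrite -diag_mulE // mxE.
  rewrite !mxE !E.
  have h0 : 0 <= (Sg l l - m) * (Qm l l * (y i l ord0 - y j l ord0) ^+ 2).
    apply: mulr_ge0; first by rewrite subr_ge0.
    by apply: mulr_ge0 => //; exact: sqr_ge0.
  lra.
have hIJ i j : 2 * m * (\sum_(l < n) Qm l l * (y i l ord0 - y j l ord0) ^+ 2) - n%:R * (2 * phi * c)
   <= \sum_(l < n) Qm l l *
     (2 * (y i l ord0 - y j l ord0) *
      ((f (y i) + phi *: \sum_(k < N) aa i k *: (Gamma *m (y k - y i))) l ord0 -
       (f (y j) + phi *: \sum_(k < N) aa j k *: (Gamma *m (y k - y j))) l ord0)).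
  apply: (@le_trans _ _ (\sum_(l < n) (2 * (Qm l l * (y i l ord0 - y j l ord0) * (f (y i) l ord0 - f (y j) l ord0)) - 2 * phi * c))).
    rewrite sumrB sumr_const card_ord -mulr_natr -mulr_sumr.
    have := hP i j; lra.
  apply: ler_sum => l _.
  rewrite !rhs_comp //.
  have := hC i j l. 
  set C := (X in - c <= X).
  move=> hc.
  have -> : Qm l l * (2 * (y i l ord0 - y j l ord0) * (f (y i) l ord0 + phi * \sum_(k < N) aa i k * (Gamma l l * (y k l ord0 - y i l ord0)) -
     (f (y j) l ord0 + phi * \sum_(k < N) aa j k * (Gamma l l * (y k l ord0 - y j l ord0)))))
     = 2 * (Qm l l * (y i l ord0 - y j l ord0) * (f (y i) l ord0 - f (y j) l ord0)) + 2 * phi * C.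
    rewrite /C; ring.
  nra.
apply: (@le_trans _ _ (\sum_(i < N) \sum_(j < N) (2 * m * (\sum_(l < n) Qm l l * (y i l ord0 - y j l ord0) ^+ 2) - n%:R * (2 * phi * c)))); last first.
  by apply: ler_sum => i _; apply: ler_sum => j _; exact: hIJ.
under eq_bigr => i _ do rewrite sumrB sumr_const card_ord -mulr_natr -mulr_sumr.
rewrite sumrB sumr_const card_ord -mulr_natr -mulr_sumr -/V /c.
have : 0 <= V * (m - phi * (2 * N%:R * M * (n%:R * N%:R * N%:R))).
  by apply: mulr_ge0 => //; lra.
lra.
Qed.

Lemma wcont_coord (A : set R) n (M : R -> 'cV[R]_n) (l : 'I_n) :
  {within A, continuous M} -> {within A, continuous (fun s => M s l ord0)}.
Proof. move=> HM x; apply: (@continuous_comp (subspace A) _ _ M (fun N : 'cV[R]_n => N l ord0) x (HM x)); exact: coord_continuous. Qed.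

Lemma wcont_sum (A : set R) m (F : 'I_m -> R -> R) :
  (forall i, {within A, continuous (F i)}) ->
  {within A, continuous (fun s => \sum_(i < m) F i s)}.
Proof.
elim: m F => [|m IH] F H.
  under [fun s => _]funext => s do rewrite big_ord0.
  by move=> x; exact: cvg_cst.
have -> : (fun s => \sum_(i < m.+1) F i s) =
   (fun s => \sum_(i < m) F (widen_ord (leqnSn m) i) s) + F ord_max.
  by apply: funext => s; rewrite big_ord_recr.
move=> x; apply: continuousD; last exact: H.
by apply: IH => i; exact: H.
Qed.

Lemma wcont_sq (A : set R) (a b : R -> R) (c : R) :
  {within A, continuous a} -> {within A, continuous b} ->
  {within A, continuous (fun s => c * (a s - b s) ^+ 2)}.
Proof.
move=> Ha Hb x.
have HB : {for x, continuous ((a - b) : subspace A -> R)} := continuousB (Ha x) (Hb x).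
have HS : {for x, continuous (((a - b) \* (a - b)) : subspace A -> R)} := continuousM HB HB.
have -> : (fun s => c * (a s - b s) ^+ 2) = (fun s => c) \* ((a - b) \* (a - b)).
  by apply: funext => s /=; rewrite expr2.
exact: (continuousM (cvg_cst _) HS).
Qed.
Lemma comp_derive n (M : R -> 'cV[R]_n) (t : R) (D : 'cV[R]_n) (l : 'I_n) :
  is_derive t 1 M D -> is_derive t 1 (fun s => M s l ord0) (D l ord0).
Proof.
move=> HD.
have dM : derivable M t 1 by case: HD.
have := (derivable_mxP M t 1).1 dM l ord0 => dc.
apply: DeriveDef => //.
have := derive_mx dM; rewrite derive_val => ->.
by rewrite mxE.
Qed.

Lemma is_derive_sumf m (F : 'I_m -> R -> R) (dF : 'I_m -> R) (t : R) :
  (forall i, is_derive t 1 (F i) (dF i)) ->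
  is_derive t 1 (fun s => \sum_(i < m) F i s) (\sum_(i < m) dF i).
Proof.
elim: m F dF => [|m IH] F dF H.
  under [fun s => _]funext => s do rewrite big_ord0.
  rewrite big_ord0; exact: is_derive_cst.
have -> : (fun s => \sum_(i < m.+1) F i s) =
   (fun s => \sum_(i < m) F (widen_ord (leqnSn m) i) s) + F ord_max.
  by apply: funext => s; rewrite big_ord_recr.
rewrite big_ord_recr /=.
apply: is_deriveD.
  exact: IH.
all: try exact: H.
Qed.

Lemma is_derive_sq (a b : R -> R) (da db c t : R) :
  is_derive t 1 a da -> is_derive t 1 b db ->
  is_derive t 1 (fun s => c * (a s - b s) ^+ 2) (c * (2 * (a t - b t) * (da - db))).
Proof.
move=> Ha Hb.
have H1 : is_derive t 1 (a - b) (da - db) by apply: is_deriveB.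
have H2 := is_deriveX 2 H1.
have H3 := is_deriveZ c H2.
have -> : (fun s => c * (a s - b s) ^+ 2) = c \*: (a - b) ^+ 2.
  by apply: funext => s /=; rewrite /GRing.scale /= !fctE.
apply: is_derive_eq.
by rewrite /GRing.scale /= !fctE expr1 mulrA.
Qed.

Lemma piece (V : R -> R) (S : R -> Prop) (u w : R) :
  {within [set t : R | 0 <= t], continuous V} ->
  (forall t, 0 < t -> ~ S t -> exists d, is_derive t 1 V d /\ 0 <= d) ->
  0 <= u -> u < w -> (forall t, u < t -> t < w -> ~ S t) -> V u <= V w.
Proof.
move=> hc hd u0 uw hS.
have hder : forall t, t \in `]u, w[ -> is_derive t 1 V ('D_1 V t).
  move=> t; rewrite in_itv /= => /andP[h1 h2].
  have [d [hd1 _]] := hd t (le_lt_trans u0 h1) (hS t h1 h2).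
  by rewrite derive_val.
have hcw : {within `[u, w], continuous V}.
  apply: continuous_subspaceW hc => z /=; rewrite in_itv /= => /andP[h _].
  exact: le_trans h.
have [c hc1 hc2] := MVT uw hder hcw.
move: hc1; rewrite in_itv /= => /andP[h1 h2].
have [d [hd1 hd2]] := hd c (le_lt_trans u0 h1) (hS c h1 h2).
move: hc2; rewrite derive_val => hc2.
rewrite -subr_ge0 hc2; apply: mulr_ge0 => //; by rewrite subr_ge0 ltW.
Qed.

Lemma mono_gen (V : R -> R) (S : R -> Prop) (Tm : R) :
  {within [set t : R | 0 <= t], continuous V} ->
  (forall t, 0 < t -> ~ S t -> exists d, is_derive t 1 V d /\ 0 <= d) ->
  (forall s1 s2, S s1 -> S s2 -> s1 < s2 -> Tm <= s2 - s1) ->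
  forall u w, 0 <= u -> u <= w -> w - u < Tm -> V u <= V w.
Proof.
move=> hc hd hT u w u0; rewrite le_eqVlt => /orP[/eqP -> //|uw] hwu.
case: (pselect (exists c, [/\ u < c, c < w & S c])) => [[c [h1 h2 hSc]]|nS].
  apply: (@le_trans _ _ (V c)).
    apply: (@piece V S u c hc hd u0 h1) => t ht1 ht2 hSt.
    have := hT _ _ hSt hSc ht2; lra.
  apply: (@piece V S c w hc hd (ltW (le_lt_trans u0 h1)) h2) => t ht1 ht2 hSt.
  have := hT _ _ hSc hSt ht1; lra.
apply: (@piece V S u w hc hd u0 uw) => t ht1 ht2 hSt; apply: nS; by exists t.
Qed.

Lemma mono_k (V : R -> R) (h : R) : 0 < h ->
  (forall u w, 0 <= u -> u <= w -> w - u <= h -> V u <= V w) ->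
  forall k : nat, V 0 <= V (k%:R * h).
Proof.
move=> h0 hm; elim=> [|k IH]; first by rewrite mul0r.
apply: le_trans IH _; apply: hm.
- by apply: mulr_ge0; [exact: ler0n | exact: ltW].
- rewrite -natr1 mulrDl mul1r lerDl; exact: ltW.
- rewrite -natr1 mulrDl mul1r; lra.
Qed.

Lemma le_term1 n (G : 'I_n -> R) l : (forall l, 0 <= G l) -> G l <= \sum_(l < n) G l.
Proof.
move=> h0; rewrite (bigD1 l) //= lerDl; apply: sumr_ge0 => *; exact: h0.
Qed.

End H.

Theorem theorem6 (R : realType) (N n Qn : nat) (hN : (2 <= N)%N) (hn : (1 <= n)%N)
  (a : 'I_Qn -> 'I_N -> 'I_N -> R)
  (ha_nonneg : forall k i j, 0 <= a k i j) (ha_diag : forall k i, a k i i = 0)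
  (sigma : R -> 'I_Qn) (Tmin : R) (hsigma : dwell_signal sigma Tmin)
  (T : R) (hT : 0 < T)
  (hconn : forall t0 : R, 0 <= t0 -> has_spanning_tree (union_edge a sigma t0 T))
  (f : 'cV[R]_n -> 'cV[R]_n) (hf : continuous f)
  (Gamma : 'M[R]_n) (hGd : is_diag_mx Gamma) (hGp : posdef Gamma)
  (Qm Sg : 'M[R]_n) (hQd : is_diag_mx Qm) (hQp : posdef Qm)
  (hSd : is_diag_mx Sg) (hSp : posdef Sg)
  (hQUAD : forall x y : 'cV[R]_n,
      0 <= ((x - y)^T *m Qm *m (f x - f y - Sg *m x + Sg *m y)) ord0 ord0) :
  exists2 phis : R, 0 < phis &
    forall phi : R, 0 < phi -> phi < phis -> ~ synchronizes f Gamma a sigma phi.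
Proof.
have [hTmin _ _ hdw] := hsigma.
have hq l : 0 < Qm l l := @diag_pos R n Qm l hQd hQp.
have hs l : 0 < Sg l l := @diag_pos R n Sg l hSd hSp.
have hg l : 0 < Gamma l l := @diag_pos R n Gamma l hGd hGp.
pose l0 : 'I_n := Ordinal hn.
pose Si := \sum_(l < n) (Sg l l)^-1.
have hSi l : (Sg l l)^-1 <= Si.
  by apply: (@le_term1 R n (fun l => (Sg l l)^-1)) => l'; rewrite invr_ge0 ltW.
have Si0 : 0 < Si by apply: lt_le_trans (hSi l0); rewrite invr_gt0.
pose m := Si^-1.
have m0 : 0 < m by rewrite invr_gt0.
have hm l : m <= Sg l l.
  by rewrite -[Sg l l]invrK lef_pV2 ?posrE ?invr_gt0 //.
pose A := \sum_(k < Qn) \sum_(i < N) \sum_(j < N) a k i j.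
pose G := \sum_(l < n) Gamma l l.
pose M := A * G.
have haM k i j l : 0 <= a k i j * Gamma l l <= M.
  apply/andP; split; first by apply: mulr_ge0 => //; exact: ltW.
  apply: ler_pM.
  - exact: ha_nonneg.
  - exact: ltW.
  - exact: (@le_term3 R Qn N N (fun k i j => a k i j) k i j ha_nonneg).
  - by apply: (@le_term1 R n (fun l => Gamma l l)) => l'; exact: ltW.
have M0 : 0 <= M.
  by have := haM (sigma 0) (Ordinal (ltnW hN)) (Ordinal (ltnW hN)) l0; case/andP => h1 h2; apply: le_trans h2.
pose K := 2 * N%:R * M * (n%:R * N%:R * N%:R).
have K0 : 0 <= K.
  rewrite /K; do ! (apply: mulr_ge0 => //); exact: ler0n.
exists (m / (K + 1)); first by apply: divr_gt0 => //; lra.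
move=> phi phi0 phiS [Hex Hall].
have hK : phi * K <= m.
  move: phiS; rewrite ltr_pdivlMr; last by lra.
  move=> h; have : 0 <= phi by exact: ltW. 
  nra.
have N0 : (0 < N)%N by exact: ltnW.
pose i0 : 'I_N := Ordinal N0.
pose i1 : 'I_N := Ordinal hN.
pose x0 := fun i : 'I_N => if i == i0 then (const_mx 1 : 'cV[R]_n) else 0.
have [x [Hsol Hx0]] := Hex x0.
pose V := fun t => \sum_(i < N) \sum_(j < N) \sum_(l < n) Qm l l * (x t i l ord0 - x t j l ord0) ^+ 2.
have hcV : {within [set t : R | 0 <= t], continuous V}.
  apply: (@wcont_sum R _ N) => i; apply: (@wcont_sum R _ N) => j; apply: (@wcont_sum R _ n) => l.
  apply: wcont_sq; apply: wcont_coord; exact: Hsol.1.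
have hder : forall t, 0 < t -> ~ switching_instant sigma t ->
    exists d, is_derive t 1 V d /\ 0 <= d.
  move=> t t0 hns.
  eexists; split.
    apply: (@is_derive_sumf R N) => i; apply: (@is_derive_sumf R N) => j.
    apply: (@is_derive_sumf R n) => l.
    apply: is_derive_sq; apply: comp_derive; exact: Hsol.2 t t0 hns _.
  rewrite /rhs.
  apply: (@key_ineq R N n f Qm Sg Gamma (a (sigma t)) phi m M (x t)) => //.
  - by move=> l; exact: ltW.
  - by rewrite /K in hK; exact: ltW.
have hmono := @mono_gen R V (switching_instant sigma) Tmin hcV hder hdw.
pose h := Tmin / 2.
have h0 : 0 < h by rewrite /h; lra.
have hk := @mono_k R V h h0 (fun u w u0 uw hwu => hmono u w u0 uw ltac:(rewrite /h in hwu; lra)).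
have V0 : 0 < V 0.
  apply: (@lt_le_trans _ _ (Qm l0 l0 * (x 0 i0 l0 ord0 - x 0 i1 l0 ord0) ^+ 2)).
    rewrite Hx0 /x0 eqxx /= !mxE subr0 expr1n mulr1; exact: hq.
  apply: (@le_term3 R N N n (fun i j l => Qm l l * (x 0 i l ord0 - x 0 j l ord0) ^+ 2)).
  by move=> *; apply: mulr_ge0; [exact: ltW | exact: sqr_ge0].
pose Qs := \sum_(i < N) \sum_(j < N) \sum_(l < n) Qm l l.
have Qs0 : 0 <= Qs.
  by apply: sumr_ge0 => *; apply: sumr_ge0 => *; apply: sumr_ge0 => *; exact: ltW.
pose e2 := V 0 / (Qs + 1).
have e20 : 0 < e2 by apply: divr_gt0 => //; lra.
have eps0 : 0 < Num.sqrt e2 by rewrite sqrtr_gt0.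
have Hnear : \forall t \near +oo, forall p : 'I_N * 'I_N,
    `|0 - enorm (x t p.1 - x t p.2)| < Num.sqrt e2.
  apply: filter_forall => p.
  exact: (cvgrPdist_lt _ _).1 (Hall x Hsol p.1 p.2) _ eps0.
case: Hnear => Mx [_ HM].
pose k := (Num.trunc (Mx / h)).+1.
have hMk : Mx < k%:R * h.
  by rewrite -ltr_pdivrMr //; exact: truncnS_gt.
have hVt := HM _ hMk.
have := hk k.
apply/negP; rewrite -ltNge.
apply: (@le_lt_trans _ _ (Qs * e2)).
  rewrite /V /Qs !mulr_suml; apply: ler_sum => i _; rewrite ?mulr_suml; apply: ler_sum => j _.
  rewrite ?mulr_suml; apply: ler_sum => l _.
  apply: ler_wpM2l; first exact: ltW.
  have := hVt (i, j); rewrite /= sub0r normrN ger0_norm ?sqrtr_ge0 // /enorm ltr_sqrt // => hlt.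
  apply: le_trans (ltW hlt).
  have -> : x (k%:R * h) i l ord0 - x (k%:R * h) j l ord0 = (x (k%:R * h) i - x (k%:R * h) j) l ord0 by rewrite !mxE.
  apply: (@le_term1 R n (fun l => (x (k%:R * h) i - x (k%:R * h) j) l ord0 ^+ 2)).
  by move=> *; exact: sqr_ge0.
rewrite /e2 mulrA ltr_pdivrMr; last by lra.
nra.
Qed.
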